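(* Let $C,D$ be simple $k$-string diagrams. Then $\pi(C)=\pi(D)$ if and only if $\ell_i(C)=\ell_i(D)$ for all $i$ and there exist permutations $\sigma_i\in\Sigma_{\ell_i(D)}$ ($1\le i\le k$; with $\sigma_0=\mathrm{id}_{\langle1\rangle}$), each order preserving on the fibres of $v^i(D)$ (i.e. $a<b$ and $v^i(D)(a)=v^i(D)(b)$ imply $\sigma_i(a)<\sigma_i(b)$), such that $v^i(C)=\sigma_{i-1}\circ v^i(D)\circ\sigma_i^{-1}$ for all $i$.
   Context: Write $\langle\ell\rangle=\{1<\dots<\ell\}$. A simple $k$-string diagram $D$ consists of natural numbers $\ell_0(D)=1,\ell_1(D),\dots,\ell_k(D)$ and arbitrary functions $v^i(D)\colon\langle\ell_i(D)\rangle\to\langle\ell_{i-1}(D)\rangle$; a globular $k$-pasting diagram is the same data with all $v^i$ order preserving. For a simple $k$-string diagram $D$ define orders $\overline{D}_i$ on the sets $\langle\ell_i(D)\rangle$ inductively: $\overline{D}_1=\langle\ell_1\rangle$ with its usual order, and $\overline{D}_{i+1}$ is the unique total order making $v^{i+1}\times\mathrm{id}\colon\overline{D}_{i+1}\to\overline{D}_i\times\langle\ell_{i+1}\rangle$ order preserving, the target carrying the lexicographic order ($(a,b)\le(a',b')$ iff $a<a'$, or $a=a'$ and $b\le b'$). Then all $v^i$ are order preserving for the orders $\overline{D}_i$, and $\pi(D)$ is the unique globular $k$-pasting diagram isomorphic to $(\overline{D}_k\to\cdots\to\overline{D}_1\to\langle1\rangle)$ via levelwise order-preserving bijections commuting with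 the maps. *)

(* Defs.v *)
From mathcomp Require Import all_boot.
Set Implicit Arguments. Unset Strict Implicit. Unset Printing Implicit Defensive.

(* Encoding: the set <l> = {1<...<l} is represented by {0,...,l-1} (nat),
   with the same (usual) order.  A k-string diagram is a record with
   ell i = l_i and v i : level i -> level (i-1) (meaningful only for
   1 <= i <= k and arguments a < ell i). *)
Record sdiag := SDiag { ell : nat -> nat ; v : nat -> nat -> nat }.

Definition is_sdiag (k : nat) (D : sdiag) : Prop :=
  ell D 0 = 1 /\
  forall i, 1 <= i <= k -> forall a, a < ell D i -> v D i a < ell D i.-1.

Definition is_globular (k : nat) (D : sdiag) : Prop :=
  is_sdiag k D /\
  forall i, 1 <= i <= k -> forall a b, a <= b < ell D i -> v D i a <= v D i b.

Definition diag_eq (k : nat) (C D : sdiag) : Prop :=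
  (forall i, i <= k -> ell C i = ell D i) /\
  (forall i, 1 <= i <= k -> forall a, a < ell C i -> v C i a = v D i a).

(* The strict order of \overline{D}_i: \overline{D}_0 = <1> (trivial), and
   \overline{D}_{i+1} is pulled back along v^{i+1} x id from the lexicographic
   order on \overline{D}_i x <l_{i+1}>.  For i+1 = 1 this gives the usual order
   on <l_1>, since v^1 is constant. *)
Fixpoint dlt (D : sdiag) (i : nat) : nat -> nat -> bool :=
  match i with
  | 0 => fun _ _ => false
  | j.+1 => fun a b =>
      dlt D j (v D j.+1 a) (v D j.+1 b) || ((v D j.+1 a == v D j.+1 b) && (a < b))
  end.

Definition drank (D : sdiag) (i a : nat) : nat :=
  count (fun b => dlt D i b a) (iota 0 (ell D i)).

Definition dunrank (D : sdiag) (i r : nat) : nat :=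
  nth 0 [seq a <- iota 0 (ell D i) | drank D i a == r] 0.

(* pi(D): transport of (\overline{D}_k -> ... -> \overline{D}_1 -> <1>) to the
   standard orders via the order-preserving bijections drank D i. *)
Definition piD (D : sdiag) : sdiag :=
  SDiag (ell D) (fun i r => drank D i.-1 (v D i (dunrank D i r))).

(* Main.v *)
Require Import Defs.
From mathcomp Require Import all_boot zify.
Set Implicit Arguments. Unset Strict Implicit.

Lemma perm_iota_map (f : nat -> nat) n :
  (forall a, a < n -> f a < n) -> {in [pred a | a < n] &, injective f} ->
  perm_eq [seq f a | a <- iota 0 n] (iota 0 n).
Proof.
move=> Hr Hi.
have U : uniq [seq f a | a <- iota 0 n].
  rewrite map_inj_in_uniq ?iota_uniq // => x y; rewrite !mem_iota /= => hx hy.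
  by apply: Hi; rewrite inE; lia.
have S : {subset [seq f a | a <- iota 0 n] <= iota 0 n}.
  by move=> x /mapP [a]; rewrite !mem_iota => ha ->; have := Hr a; lia.
have [_ E] := uniq_min_size U S (eq_leq (esym (size_map _ _))).
by apply: uniq_perm => //; apply: iota_uniq.
Qed.

Lemma surj_iota (f : nat -> nat) n :
  (forall a, a < n -> f a < n) -> {in [pred a | a < n] &, injective f} ->
  forall r, r < n -> exists2 a, a < n & f a = r.
Proof.
move=> Hr Hi r hr.
have := perm_mem (perm_iota_map Hr Hi) r; rewrite mem_iota hr /= => /mapP [a].
rewrite mem_iota => ha ->; exists a => //; lia.
Qed.

Lemma count_iota_map (f : nat -> nat) n (p : pred nat) :
  (forall a, a < n -> f a < n) -> {in [pred a | a < n] &, injective f} ->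
  count p (iota 0 n) = count (fun a => p (f a)) (iota 0 n).
Proof.
move=> Hr Hi; have /permP E := perm_iota_map Hr Hi.
by rewrite -E count_map.
Qed.

Lemma dlt_irr D i a : dlt D i a a = false.
Proof. elim: i a => [|i IH] a //=; by rewrite IH ltnn andbF. Qed.

Lemma dlt_trans D i a b c : dlt D i a b -> dlt D i b c -> dlt D i a c.
Proof.
elim: i a b c => [|i IH] a b c //=.
move=> /orP [h1 | /andP [/eqP e1 l1]] /orP [h2 | /andP [/eqP e2 l2]].
- by rewrite (IH _ _ _ h1 h2).
- by rewrite -e2 h1.
- by rewrite e1 h2.
- by rewrite e1 e2 eqxx (ltn_trans l1 l2) orbT.
Qed.

Lemma dlt_total k D : is_sdiag k D -> forall i, i <= k ->
  forall a b, a < ell D i -> b < ell D i -> a != b -> dlt D i a b || dlt D i b a.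
Proof.
move=> [H0 Hv]; elim=> [|i IH] hi a b ha hb hab /=.
  by move: ha hb hab; rewrite H0; case: a; case: b.
have ha' := Hv i.+1 (ltac:(lia)) a ha; have hb' := Hv i.+1 (ltac:(lia)) b hb.
case: (eqVneq (v D i.+1 a) (v D i.+1 b)) => e.
  rewrite e dlt_irr /=; lia.
by rewrite !andFb !orbF; apply: IH => //; lia.
Qed.

Lemma count_split (p q : pred nat) s : subpred p q ->
  count q s = count p s + count (fun x => q x && ~~ p x) s.
Proof.
move=> H; elim: s => //= x s ->.
case: (boolP (p x)) => px; [rewrite (H _ px) |]; case: (q x) => /=; lia.
Qed.

Lemma drank_lt D i a : a < ell D i -> drank D i a < ell D i.
Proof.
move=> ha; rewrite /drank.
have := count_predC (fun b => dlt D i b a) (iota 0 (ell D i)).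
rewrite size_iota.
have : 0 < count (predC (fun b => dlt D i b a)) (iota 0 (ell D i)).
  rewrite -has_count; apply/hasP; exists a; first by rewrite mem_iota; lia.
  by rewrite /= dlt_irr.
lia.
Qed.

Lemma drank_mono D i a b : a < ell D i -> dlt D i a b -> drank D i a < drank D i b.
Proof.
move=> ha hab; rewrite /drank.
rewrite (@count_split (fun c => dlt D i c a) (fun c => dlt D i c b)).
  have : 0 < count (fun x => dlt D i x b && ~~ dlt D i x a) (iota 0 (ell D i)).
    rewrite -has_count; apply/hasP; exists a; first by rewrite mem_iota; lia.
    by rewrite hab dlt_irr.
  lia.
by move=> c hc; apply: dlt_trans hc hab.
Qed.

Lemma drank_inj k D : is_sdiag k D -> forall i, i <= k ->
  forall a b, a < ell D i -> b < ell D i -> drank D i a = drank D i b -> a = b.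
Proof.
move=> HD i hi a b ha hb e; apply/eqP; apply: contraT => ne.
have /orP [h|h] := dlt_total HD hi ha hb ne.
  by have := drank_mono ha h; rewrite e ltnn.
by have := drank_mono hb h; rewrite e ltnn.
Qed.

Lemma drank_refl k D : is_sdiag k D -> forall i, i <= k ->
  forall a b, a < ell D i -> b < ell D i -> drank D i a < drank D i b -> dlt D i a b.
Proof.
move=> HD i hi a b ha hb l.
case: (eqVneq a b) => ne; first by move: l; rewrite ne ltnn.
have /orP [h|h] := dlt_total HD hi ha hb ne => //.
by have := drank_mono hb h; lia.
Qed.

Lemma dunrank_spec k D : is_sdiag k D -> forall i, i <= k ->
  forall r, r < ell D i -> dunrank D i r < ell D i /\ drank D i (dunrank D i r) = r.
Proof.
move=> HD i hi r hr.
have [a ha ear] := surj_iota (@drank_lt D i) (fun x y hx hy => drank_inj HD hi hx hy) hr.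
set s := [seq a <- iota 0 (ell D i) | drank D i a == r].
have ins : a \in s by rewrite mem_filter ear eqxx mem_iota /=; lia.
have sz : 0 < size s by case: s ins.
have := mem_nth 0 sz; rewrite mem_filter mem_iota => /andP [/eqP e hh].
rewrite /dunrank -/s e; split=> //; lia.
Qed.

Lemma dunrank_drank k D : is_sdiag k D -> forall i, i <= k ->
  forall a, a < ell D i -> dunrank D i (drank D i a) = a.
Proof.
move=> HD i hi a ha.
have [h1 h2] := dunrank_spec HD hi (drank_lt ha).
exact: (drank_inj HD hi h1 ha h2).
Qed.

Definition sig_hyp k (C D : sdiag) (sigma : nat -> nat -> nat) :=
      (forall i, 1 <= i <= k ->
         (forall a, a < ell D i -> sigma i a < ell D i) /\
         {in [pred a | a < ell D i] &, injective (sigma i)} /\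
         (forall a b, a < b < ell D i -> v D i a = v D i b ->
            sigma i a < sigma i b) /\
         (forall a, a < ell D i -> v C i (sigma i a) = sigma i.-1 (v D i a))).

Lemma iso_lvl k C D sigma : is_sdiag k C -> is_sdiag k D ->
  sigma 0 0 = 0 -> sig_hyp k C D sigma -> forall i, i <= k ->
  forall a b, a < ell D i -> b < ell D i ->
  dlt C i (sigma i a) (sigma i b) = dlt D i a b.
Proof.
move=> [HC0 HCv] [HD0 HDv] s0 Hs; elim=> [|j IH] hj a b ha hb //=.
have [Hr [Hi [Hf Hc]]] := Hs j.+1 (ltac:(lia)).
rewrite !Hc //.
have ha' := HDv j.+1 (ltac:(lia)) a ha; have hb' := HDv j.+1 (ltac:(lia)) b hb.
rewrite IH //; try lia.
have E : (sigma j (v D j.+1 a) == sigma j (v D j.+1 b)) = (v D j.+1 a == v D j.+1 b).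
  case: (posnP j) => [j0|jp].
    move: ha' hb'; rewrite j0 /= HD0 !ltnS !leqn0 => /eqP -> /eqP ->.
    by rewrite !eqxx.
  have [_ [Hi' _]] := Hs j (ltac:(lia)).
  apply/eqP/eqP => [e|->] //; apply: Hi' => //; rewrite inE; lia.
rewrite E; case: (eqVneq (v D j.+1 a) (v D j.+1 b)) => e //=.
congr (_ || _).
case: (ltngtP a b) => l.
- by apply: Hf => //; lia.
- apply/negbTE; rewrite -leqNgt; apply: ltnW; apply: Hf => //; lia.
- by rewrite l ltnn.
Qed.

Lemma drank_sig k C D sigma : is_sdiag k C -> is_sdiag k D ->
  (forall i, i <= k -> ell C i = ell D i) ->
  sigma 0 0 = 0 -> sig_hyp k C D sigma -> forall i, 1 <= i <= k ->
  forall a, a < ell D i -> drank C i (sigma i a) = drank D i a.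
Proof.
move=> HC HD El s0 Hs i hi a ha.
have [Hr [Hi _]] := Hs i hi.
rewrite /drank El; last lia.
rewrite (count_iota_map _ Hr Hi).
apply: eq_in_count => c; rewrite mem_iota => hc /=.
apply: (iso_lvl HC HD s0 Hs) => //; lia.
Qed.

Theorem mainTheorem5 (k : nat) (C D : sdiag) :
  is_sdiag k C -> is_sdiag k D ->
  (diag_eq k (piD C) (piD D) <->
   ((forall i, i <= k -> ell C i = ell D i) /\
    exists sigma : nat -> nat -> nat,
      sigma 0 0 = 0 /\
      (forall i, 1 <= i <= k ->
         (forall a, a < ell D i -> sigma i a < ell D i) /\
         {in [pred a | a < ell D i] &, injective (sigma i)} /\
         (forall a b, a < b < ell D i -> v D i a = v D i b ->
            sigma i a < sigma i b) /\
         (forall a, a < ell D i -> v C i (sigma i a) = sigma i.-1 (v D i a))))).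
Proof.
move=> HC HD; split.
- move=> [El Ev]; rewrite /= in El.
  set sigma := fun i a => dunrank C i (drank D i a).
  have Sr : forall i, i <= k -> forall a, a < ell D i -> sigma i a < ell C i.
    move=> i hi a ha; rewrite /sigma.
    by have [] := dunrank_spec HC hi (r := drank D i a); rewrite El // drank_lt.
  have Sd : forall i, i <= k -> forall a, a < ell D i -> drank C i (sigma i a) = drank D i a.
    move=> i hi a ha; rewrite /sigma.
    by have [] := dunrank_spec HC hi (r := drank D i a); rewrite El // drank_lt.
  have Hc : forall i, 1 <= i <= k -> forall a, a < ell D i ->
      v C i (sigma i a) = sigma i.-1 (v D i a).
    move=> i hi a ha.
    have hr : drank D i a < ell C i by rewrite El; [apply: drank_lt|lia].
    have := Ev i hi _ hr; rewrite /= (dunrank_drank HD _ ha); last lia.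
    move=> e.
    have hv : v C i (sigma i a) < ell C i.-1 by apply: HC.2 => //; apply: Sr => //; lia.
    rewrite -(dunrank_drank HC _ hv); last lia.
    by rewrite /sigma in e *; rewrite e.
  split=> //; exists sigma; split.
    rewrite /sigma /drank /= count_pred0.
    have h0 : 0 < ell C 0 by rewrite HC.1.
    have := dunrank_drank HC (leq0n k) h0.
    by rewrite /drank /= count_pred0.
  move=> i hi; have hik : i <= k by lia.
  split; first by move=> a ha; rewrite -El //; apply: Sr.
  have Inj : {in [pred a | a < ell D i] &, injective (sigma i)}.
    move=> x y; rewrite !inE => hx hy e.
    apply: (drank_inj HD hik hx hy).
    by rewrite -(Sd i hik x hx) -(Sd i hik y hy) e.
  split=> //; split; last exact: Hc i hi.
  move=> a b hab e.
  have hb : b < ell D i by lia.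
  have ha : a < ell D i by lia.
  have dD : dlt D i a b.
    case: i hi {hik Inj} hb ha e hab => [|j] hi hb ha e hab; first lia.
    by rewrite /= e eqxx /=; apply/orP; right; lia.
  have dC : dlt C i (sigma i a) (sigma i b).
    apply: (drank_refl HC hik); try apply: Sr => //.
    by rewrite !Sd //; apply: drank_mono.
  have ec : v C i (sigma i a) = v C i (sigma i b) by rewrite !Hc // e.
  case: i hi {hik Inj} hb ha e hab dD dC ec => [|j] hi hb ha e hab dD dC ec; first lia.
  by move: dC; rewrite /= ec dlt_irr eqxx.

- move=> [El [sigma [s0 Hs]]].
  have Hs' : sig_hyp k C D sigma by [].
  split=> // i hi r hr /=.
  have hik : i <= k by lia.
  have hr' : r < ell D i by rewrite -El.
  have [ha ea] := dunrank_spec HD hik hr'.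
  set a := dunrank D i r in ha ea *.
  have [Hr [_ [_ Hc]]] := Hs i hi.
  have e1 : dunrank C i r = sigma i a.
    rewrite -ea -(drank_sig HC HD El s0 Hs' hi ha).
    apply: (dunrank_drank HC hik); rewrite El //; exact: Hr.
  rewrite e1 Hc //.
  have hv : v D i a < ell D i.-1 by apply: HD.2.
  move: (v D i a) hv => x hv.
  case: i hi {hik hr' ha ea Hr Hc e1 hr a} hv => [|[|j]] hi hv; first lia.
    by rewrite /drank /= !count_pred0.
  by rewrite (drank_sig HC HD El s0 Hs') //; lia.
Qed.
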